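(* Let $G$ be a group with the unique root property which is generated by the union of two subgroups $A$ and $B$, let $H$ be a finite-index subgroup of $G$, and let $\varphi:H\to H$ be an automorphism. If $\varphi\neq\mathrm{id}$ but $\varphi|_{H\cap A}=\mathrm{id}$ and $\varphi|_{H\cap B}=\mathrm{id}$, then $\varphi$ does not extend to an automorphism of $G$.
   Context: A group $G$ has the unique root property if for all $x,y\in G$ and every positive integer $n$, $x^n=y^n$ implies $x=y$. *)

(* Defs.v *)
From Stdlib Require Import List.

Record group := Group {
  carrier :> Type;
  gmul : carrier -> carrier -> carrier;
  ginv : carrier -> carrier;
  gone : carrier;
  gmulA : forall x y z, gmul x (gmul y z) = gmul (gmul x y) z;
  gmul1l : forall x, gmul gone x = x;
  gmulVl : forall x, gmul (ginv x) x = gone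
}.

Arguments gmul {g}.
Arguments ginv {g}.
Arguments gone {g}.

Fixpoint gpow {G : group} (x : G) (n : nat) : G :=
  match n with
  | O => gone
  | S m => gmul x (gpow x m)
  end.

Definition unique_root (G : group) : Prop :=
  forall (x y : G) (n : nat), 0 < n -> gpow x n = gpow y n -> x = y.

Definition subgroup {G : group} (H : G -> Prop) : Prop :=
  H gone /\ (forall x y, H x -> H y -> H (gmul x y)) /\ (forall x, H x -> H (ginv x)).

Definition generated_by_union {G : group} (A B : G -> Prop) : Prop :=
  forall K : G -> Prop, subgroup K ->
    (forall a, A a -> K a) -> (forall b, B b -> K b) -> forall x, K x.

(* H has finite index: finitely many left cosets g H cover G *)
Definition finite_index {G : group} (H : G -> Prop) : Prop :=
  exists reps : list G, forall x : G, exists g, In g reps /\ H (gmul (ginv g) x).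

(* phi (restricted to H) is an automorphism of the subgroup H *)
Definition is_aut_of_subgroup {G : group} (H : G -> Prop) (phi : G -> G) : Prop :=
  (forall h, H h -> H (phi h)) /\
  (forall h k, H h -> H k -> phi (gmul h k) = gmul (phi h) (phi k)) /\
  (forall h k, H h -> H k -> phi h = phi k -> h = k) /\
  (forall k, H k -> exists h, H h /\ phi h = k).

Definition is_aut {G : group} (psi : G -> G) : Prop :=
  (forall x y, psi (gmul x y) = gmul (psi x) (psi y)) /\
  (forall x y, psi x = psi y -> x = y) /\
  (forall y, exists x, psi x = y).

(* Main.v *)
Require Import Defs.
From Stdlib Require Import List Lia Classical ClassicalEpsilon.

Section GL.
Variable G : group.
Lemma mulVr (x : G) : gmul x (ginv x) = gone.
Proof.
  rewrite <- (gmul1l G (gmul x (ginv x))).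
  rewrite <- (gmulVl G (ginv x)) at 1.
  rewrite <- gmulA, (gmulA _ (ginv x) x), gmulVl, gmul1l. apply gmulVl.
Qed.
Lemma mul1r (x : G) : gmul x gone = x.
Proof. rewrite <- (gmulVl G x), gmulA, mulVr, gmul1l. reflexivity. Qed.
Lemma mulI (a x y : G) : gmul a x = gmul a y -> x = y.
Proof. intro E. rewrite <- (gmul1l G x), <- (gmul1l G y), <- (gmulVl G a), <- !gmulA, E. reflexivity. Qed.
Lemma inv_uniq (x y : G) : gmul y x = gone -> y = ginv x.
Proof. intro E. rewrite <- (mul1r y), <- (mulVr x), gmulA, E, gmul1l. reflexivity. Qed.
Lemma gpow_add (x : G) i d : gpow x (i + d) = gmul (gpow x i) (gpow x d).
Proof. induction i; simpl. rewrite gmul1l; reflexivity. rewrite IHi, gmulA; reflexivity. Qed.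

Lemma power_in (H : G -> Prop) : subgroup H -> finite_index H ->
  forall x : G, exists n, 0 < n /\ H (gpow x n).
Proof.
  intros [_ [HM HI]] [reps Hr] x.
  assert (Hf : forall i, exists g, In g reps /\ H (gmul (ginv g) (gpow x i))) by (intro; apply Hr).
  apply choice in Hf. destruct Hf as [f Hf].
  set (N := length reps).
  destruct (classic (exists i j, i < j <= N /\ f i = f j)) as [[i [j [Hij E]]]|C].
  - exists (j - i). split; [lia|].
    replace j with (i + (j - i)) in Hij, E |- * by lia. replace (i + (j - i) - i) with (j - i) by lia.
    pose proof (HM _ _ (HI _ (proj2 (Hf i))) (proj2 (Hf (i + (j-i))))) as K.
    rewrite <- E, gpow_add in K. rewrite (gmulA _ (ginv (f i))), gmulA, gmulVl, gmul1l in K. exact K.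
  - exfalso.
    assert (ND : NoDup (map f (seq 0 (S N)))).
    { apply NoDup_map_NoDup_ForallPairs; [|apply seq_NoDup].
      intros a b Ha Hb Eab. apply in_seq in Ha, Hb.
      destruct (PeanoNat.Nat.lt_trichotomy a b) as [L|[L|L]]; auto; exfalso; apply C.
      - exists a, b. split; [lia|auto].
      - exists b, a. split; [lia|auto]. }
    assert (Inc : incl (map f (seq 0 (S N))) reps).
    { intros g Hg. apply in_map_iff in Hg. destruct Hg as [i [<- _]]. apply Hf. }
    pose proof (NoDup_incl_length ND Inc). rewrite length_map, length_seq in H0.
    unfold N in H0. lia.
Qed.
End GL.

Theorem lemma3p1 (G : group) (A B H : G -> Prop) (phi : G -> G) :
  unique_root G ->
  subgroup A -> subgroup B -> generated_by_union A B ->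
  subgroup H -> finite_index H ->
  is_aut_of_subgroup H phi ->
  (exists h, H h /\ phi h <> h) ->
  (forall h, H h -> A h -> phi h = h) ->
  (forall h, H h -> B h -> phi h = h) ->
  ~ (exists psi : G -> G, is_aut psi /\ forall h, H h -> psi h = phi h).
Proof.
  intros UR SA SB Gen SH FI _ [h0 [Hh0 Nh0]] FA FB [psi [[PM _] Ext]].
  assert (P1 : psi gone = gone).
  { symmetry. apply (mulI G (psi gone)). rewrite <- PM, mul1r, gmul1l. reflexivity. }
  assert (Ppow : forall x n, psi (gpow x n) = gpow (psi x) n).
  { induction n; simpl; [exact P1|rewrite PM, IHn; reflexivity]. }
  assert (Fix : forall (S : G -> Prop), subgroup S -> (forall h, H h -> S h -> phi h = h) ->
            forall a, S a -> psi a = a).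
  { intros S [S1 [SM SI]] FS a Sa.
    destruct (power_in G H SH FI a) as [n [Hn Han]].
    apply (UR _ _ n Hn). rewrite <- Ppow, Ext by exact Han. apply FS; auto.
    clear Hn Han. induction n; simpl; auto. }
  assert (All : forall x, psi x = x).
  { apply (Gen (fun x => psi x = x)).
    - split; [exact P1|split].
      + intros x y Ex Ey. rewrite PM, Ex, Ey. reflexivity.
      + intros x Ex. rewrite <- Ex at 2. apply inv_uniq. rewrite <- PM, gmulVl. exact P1.
    - apply Fix; auto.
    - apply Fix; auto. }
  apply Nh0. rewrite <- Ext by exact Hh0. apply All.
Qed.
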